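(* Let $S=\mathbb{N}_\wedge$ and let $w$ be a weight on $S$. Then $T=\begin{pmatrix}\ell^{1}(S,w)&\ell^{1}(S,w)\\0&\ell^{1}(S,w)\end{pmatrix}$ is not approximately biprojective.
   Context: $\mathbb{N}_\wedge$ is $\mathbb{N}$ with operation $m\wedge n=\min\{m,n\}$. A weight is a function $w:S\to\mathbb{R}^+$ with $w(st)\le w(s)w(t)$; $\ell^1(S,w)=\{f:\sum_s|f(s)|w(s)<\infty\}$ with convolution $\delta_s*\delta_t=\delta_{st}$. For a Banach algebra $A$, $T=\begin{pmatrix}A&A\\0&A\end{pmatrix}$ is the algebra of upper triangular matrices with entries in $A$, matrix operations and norm $\|a\|+\|x\|+\|b\|$. A Banach algebra $B$ is approximately biprojective if there is a net $(\rho_\alpha)$ of continuous $B$-bimodule morphisms $B\to B\otimes_pB$ with $\pi_B\circ\rho_\alpha(b)\to b$ for all $b$, where $\pi_B(b\otimes c)=bc$. *)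

(* Defs.v *)
From HB Require Import structures.
From mathcomp Require Import all_boot all_order all_algebra.
From mathcomp Require Import all_classical all_reals topology normedtype sequences.
From mathcomp Require Import complex.
Set Implicit Arguments. Unset Strict Implicit. Unset Printing Implicit Defensive.
Import Order.TTheory GRing.Theory Num.Theory.
Import numFieldTopology.Exports numFieldNormedType.Exports.
Local Open Scope ring_scope.

(* the sum of a complex series (real and imaginary parts summed separately;
   only used for absolutely convergent series) *)
Definition csum (R : realType) (c : nat -> R[i]) : R[i] :=
  (limn (fun N => \sum_(n < N) (@complex.Re R (c n) : R)) +i* limn (fun N => \sum_(n < N) (@complex.Im R (c n) : R)))%C.

Definition cnorm (R : realType) (z : R[i]) : R := ComplexField.Normc.normc z.

(* A Banach algebra over C, presented by a carrier type with a membership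
   predicate (the elements of the algebra), its operations and its norm. *)
Record balg (R : realType) := BAlg {
  bcar :> Type;
  bmem : bcar -> Prop;
  bzero : bcar;
  badd : bcar -> bcar -> bcar;
  bopp : bcar -> bcar;
  bscal : R[i] -> bcar -> bcar;
  bmul : bcar -> bcar -> bcar;
  bnorm : bcar -> R }.

Section Tensor.
Variables (R : realType) (B : balg R).

(* An element of the completed projective tensor product B ⊗_p B is represented
   by a series  sum_n x_n ⊗ y_n  with  sum_n ||x_n|| ||y_n|| < oo. *)
Definition rep := nat -> (bcar B * bcar B).

Definition rep_ok (u : rep) : Prop :=
  (forall n, bmem (u n).1 /\ bmem (u n).2) /\
  exists M : R, forall N, \sum_(n < N) bnorm (u n).1 * bnorm (u n).2 <= M.

Definition rep_cost (u : rep) : R :=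
  limn (fun N => \sum_(n < N) bnorm (u n).1 * bnorm (u n).2).

(* bounded bilinear forms B x B -> C (the dual of B ⊗_p B) *)
Definition bdd_bilinear (phi : bcar B -> bcar B -> R[i]) : Prop :=
  (forall a a' b, bmem a -> bmem a' -> bmem b ->
     phi (badd a a') b = phi a b + phi a' b /\ phi b (badd a a') = phi b a + phi b a') /\
  (forall (l : R[i]) a b, bmem a -> bmem b ->
     phi (bscal l a) b = l * phi a b /\ phi a (bscal l b) = l * phi a b) /\
  exists M : R, forall a b, bmem a -> bmem b ->
     cnorm (phi a b) <= M * bnorm a * bnorm b.

(* equality in B ⊗_p B of the elements represented by u and v
   (elements of the projective tensor product are separated by its dual) *)
Definition teq (u v : rep) : Prop :=
  forall phi, bdd_bilinear phi ->
    csum (fun n => phi (u n).1 (u n).2) = csum (fun n => phi (v n).1 (v n).2).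

Definition tadd (u v : rep) : rep :=
  fun n => if odd n then v n./2 else u n./2.
Definition tscal (l : R[i]) (u : rep) : rep :=
  fun n => (bscal l (u n).1, (u n).2).
Definition tlmul (a : bcar B) (u : rep) : rep :=
  fun n => (bmul a (u n).1, (u n).2).
Definition trmul (u : rep) (a : bcar B) : rep :=
  fun n => ((u n).1, bmul (u n).2 a).

Definition tnorm_le (u : rep) (r : R) : Prop :=
  forall eps : R, 0 < eps -> exists v, rep_ok v /\ teq v u /\ rep_cost v <= r + eps.

(* pi_B (sum_n x_n ⊗ y_n) = c, i.e. sum_n x_n y_n converges to c in B *)
Definition pi_to (u : rep) (c : bcar B) : Prop :=
  bmem c /\
  forall eps : R, 0 < eps -> exists N0, forall N, (N0 <= N)%N ->
    bnorm (badd (\big[@badd R B/@bzero R B]_(n < N) bmul (u n).1 (u n).2) (bopp c)) < eps.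

Definition bimod_morph (rho : bcar B -> rep) : Prop :=
  (forall a, bmem a -> rep_ok (rho a)) /\
  (forall a b, bmem a -> bmem b -> teq (rho (badd a b)) (tadd (rho a) (rho b))) /\
  (forall l a, bmem a -> teq (rho (bscal l a)) (tscal l (rho a))) /\
  (exists C : R, forall a, bmem a -> tnorm_le (rho a) (C * bnorm a)) /\
  (forall a b, bmem a -> bmem b -> teq (rho (bmul a b)) (tlmul a (rho b))) /\
  (forall a b, bmem a -> bmem b -> teq (rho (bmul b a)) (trmul (rho b) a)).

Definition approx_biprojective : Prop :=
  exists (I : Type) (le : I -> I -> Prop) (rho : I -> bcar B -> rep),
    inhabited I /\
    (forall i, le i i) /\
    (forall i j k, le i j -> le j k -> le i k) /\
    (forall i j, exists k, le i k /\ le j k) /\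
    (forall i, bimod_morph (rho i)) /\
    (forall b, bmem b -> forall eps : R, 0 < eps -> exists i0, forall i, le i0 i ->
       exists c, pi_to (rho i b) c /\ bnorm (badd c (bopp b)) < eps).

End Tensor.

Definition is_weight (R : realType) (w : nat -> R) : Prop :=
  (forall n, 0 < w n) /\ (forall m n, w (minn m n) <= w m * w n).

Definition in_l1 (R : realType) (w : nat -> R) (f : nat -> R[i]) : Prop :=
  exists M : R, forall N, \sum_(n < N) cnorm (f n) * w n <= M.

Definition l1norm (R : realType) (w : nat -> R) (f : nat -> R[i]) : R :=
  limn (fun N => \sum_(n < N) cnorm (f n) * w n).

(* convolution on l^1(N_wedge): (f * g)(k) = sum_{m /\ n = k} f(m) g(n);
   the pairs with min m n = k are split into {m = k, n >= k} and {m > k, n = k}. *)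
Definition conv (R : realType) (f g : nat -> R[i]) : nat -> R[i] :=
  fun k => f k * csum (fun j => g (k + j)%N) + g k * csum (fun j => f (k.+1 + j)%N).

(* T = [[l1, l1],[0, l1]]: (a, x, b) stands for the matrix [[a, x],[0, b]] *)
Definition Tmat (R : realType) (w : nat -> R) : balg R :=
  @BAlg R ((nat -> R[i]) * (nat -> R[i]) * (nat -> R[i]))
    (fun t => in_l1 w t.1.1 /\ in_l1 w t.1.2 /\ in_l1 w t.2)
    ((fun _ => 0), (fun _ => 0), (fun _ => 0))
    (fun s t => ((fun n => s.1.1 n + t.1.1 n), (fun n => s.1.2 n + t.1.2 n),
                 (fun n => s.2 n + t.2 n)))
    (fun s => ((fun n => - s.1.1 n), (fun n => - s.1.2 n), (fun n => - s.2 n)))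
    (fun l s => ((fun n => l * s.1.1 n), (fun n => l * s.1.2 n), (fun n => l * s.2 n)))
    (fun s t => (conv s.1.1 t.1.1,
                 (fun n => conv s.1.1 t.1.2 n + conv s.1.2 t.2 n),
                 conv s.2 t.2))
    (fun s => l1norm w s.1.1 + l1norm w s.1.2 + l1norm w s.2).

(* Main.v *)
Require Import Defs.
From HB Require Import structures.
From mathcomp Require Import all_boot all_order all_algebra.
From mathcomp Require Import all_classical all_reals topology normedtype sequences.
From mathcomp Require Import complex.
From mathcomp Require Import ring lra.
Set Implicit Arguments. Unset Strict Implicit. Unset Printing Implicit Defensive.
Import Order.TTheory GRing.Theory Num.Theory.
Import numFieldTopology.Exports numFieldNormedType.Exports.
Local Open Scope classical_set_scope.
Local Open Scope ring_scope.

Section S.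
Variable R : realType.
Notation Re := (@complex.Re R).
Notation Im := (@complex.Im R).

Definition ccv (u : nat -> R[i]) (z : R[i]) :=
  (fun N => Re (u N)) @ \oo --> Re z /\ (fun N => Im (u N)) @ \oo --> Im z.

Lemma ReM (x y : R[i]) : Re (x * y) = Re x * Re y - Im x * Im y.
Proof. by case: x; case: y. Qed.
Lemma ImM (x y : R[i]) : Im (x * y) = Re x * Im y + Im x * Re y.
Proof. by case: x => a b; case: y => c d /=; rewrite addrC. Qed.
Lemma ReD (x y : R[i]) : Re (x + y) = Re x + Re y.
Proof. by case: x; case: y. Qed.
Lemma ImD (x y : R[i]) : Im (x + y) = Im x + Im y.
Proof. by case: x; case: y. Qed.
Lemma ReN (x : R[i]) : Re (- x) = - Re x.
Proof. by case: x. Qed.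
Lemma ImN (x : R[i]) : Im (- x) = - Im x.
Proof. by case: x. Qed.
Lemma ReB (x y : R[i]) : Re (x - y) = Re x - Re y.
Proof. by rewrite ReD ReN. Qed.
Lemma ImB (x y : R[i]) : Im (x - y) = Im x - Im y.
Proof. by rewrite ImD ImN. Qed.
Lemma Re_sum (F : nat -> R[i]) N : Re (\sum_(n < N) F n) = \sum_(n < N) Re (F n).
Proof.
elim: N => [|N IH]; first by rewrite !big_ord0.
by rewrite !big_ord_recr /= ReD IH.
Qed.
Lemma Im_sum (F : nat -> R[i]) N : Im (\sum_(n < N) F n) = \sum_(n < N) Im (F n).
Proof.
elim: N => [|N IH]; first by rewrite !big_ord0.
by rewrite !big_ord_recr /= ImD IH.
Qed.

Lemma ccv_mul u v a b : ccv u a -> ccv v b -> ccv (fun N => u N * v N) (a * b).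
Proof.
move=> [ua ua'] [vb vb']; split.
  rewrite ReM. under eq_fun => N do rewrite ReM.
  by apply: cvgB; apply: cvgM.
rewrite ImM. under eq_fun => N do rewrite ImM.
by apply: cvgD; apply: cvgM.
Qed.
Lemma ccv_add u v a b : ccv u a -> ccv v b -> ccv (fun N => u N + v N) (a + b).
Proof.
move=> [ua ua'] [vb vb']; split.
  rewrite ReD. under eq_fun => N do rewrite ReD.
  by apply: cvgD.
rewrite ImD. under eq_fun => N do rewrite ImD.
by apply: cvgD.
Qed.
Lemma ccv_opp u a : ccv u a -> ccv (fun N => - u N) (- a).
Proof.
move=> [ua ua']; split.
  rewrite ReN. under eq_fun => N do rewrite ReN.
  by apply: cvgN.
rewrite ImN. under eq_fun => N do rewrite ImN.
by apply: cvgN.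
Qed.
Lemma ccv_cst a : ccv (fun _ => a) a.
Proof. by split; apply: cvg_cst. Qed.
Lemma ccv_ext u v a : (forall N, u N = v N) -> ccv u a -> ccv v a.
Proof. by move=> e; have -> : u = v by apply: funext. Qed.
Lemma ccv_csum (f : nat -> R[i]) (z : R[i]) : ccv (fun N => \sum_(n < N) f n) z -> csum f = z.
Proof.
move=> [h1 h2]; rewrite /csum.
under eq_fun => N do rewrite -Re_sum.
under [X in (_ +i* limn X)%C]eq_fun => N do rewrite -Im_sum.
by rewrite (cvg_lim _ h1) // (cvg_lim _ h2) //; case: z {h1 h2}.
Qed.

Lemma abs_cvg (f : nat -> R) (M : R) : (forall N, \sum_(n < N) `|f n| <= M) ->
  cvgn (fun N => \sum_(n < N) f n).
Proof.
move=> hM.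
have : cvgn (series f).
  apply: normed_cvg; apply: nondecreasing_is_cvgn.
    apply/nondecreasing_seqP => n; rewrite /normed_series_of !seriesEord /= big_ord_recr /=.
    by rewrite lerDl.
  exists M => _ [n _ <-]; rewrite /normed_series_of seriesEord /=; exact: hM.
by rewrite seriesEord.
Qed.

Lemma cnorm_ge0 (z : R[i]) : 0 <= cnorm z.
Proof. by case: z => a b; rewrite /cnorm /=; exact: sqrtr_ge0. Qed.
Lemma Re_le (z : R[i]) : `|Re z| <= cnorm z.
Proof.
case: z => a b; rewrite /cnorm /= -sqrtr_sqr; apply: ler_wsqrtr.
by rewrite lerDl sqr_ge0.
Qed.
Lemma Im_le (z : R[i]) : `|Im z| <= cnorm z.
Proof.
case: z => a b; rewrite /cnorm /= -sqrtr_sqr; apply: ler_wsqrtr.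
by rewrite lerDr sqr_ge0.
Qed.
Lemma cnorm_le (z : R[i]) : cnorm z <= `|Re z| + `|Im z|.
Proof.
case: z => a b; rewrite /cnorm /=.
have H : a ^+ 2 + b ^+ 2 <= (`|a| + `|b|) ^+ 2.
  rewrite sqrrD !real_normK ?num_real // lerD2r lerDl.
  by rewrite mulrn_wge0 // mulr_ge0.
apply: le_trans (ler_wsqrtr H) _.
by rewrite sqrtr_sqr ger0_norm // addr_ge0.
Qed.
Lemma cnormM (x y : R[i]) : cnorm (x * y) = cnorm x * cnorm y.
Proof. exact: ComplexField.Normc.normcM. Qed.
Lemma cnormN (x : R[i]) : cnorm (- x) = cnorm x.
Proof. by case: x => a b; rewrite /cnorm /= !sqrrN. Qed.
Lemma cnorm0 : cnorm (0 : R[i]) = 0.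
Proof. exact: ComplexField.Normc.normc0. Qed.
Lemma cnorm1 : cnorm (1 : R[i]) = 1.
Proof. exact: ComplexField.Normc.normc1. Qed.
Lemma cnormD (x y : R[i]) : cnorm (x + y) <= cnorm x + cnorm y.
Proof.
have := ler_normD x y.
rewrite !normc_def -rmorphD lecR.
by case: x => a b; case: y => c d.
Qed.
Definition asum (f : nat -> R[i]) := exists M : R, forall N, \sum_(n < N) cnorm (f n) <= M.

Lemma asum_ccv f : asum f -> ccv (fun N => \sum_(n < N) f n) (csum f).
Proof.
move=> [M hM].
have h1 : cvgn (fun N => \sum_(n < N) Re (f n)).
  apply: (@abs_cvg (fun n => Re (f n)) M) => N; apply: le_trans (hM N).
  by apply: ler_sum => n _; exact: Re_le.
have h2 : cvgn (fun N => \sum_(n < N) Im (f n)).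
  apply: (@abs_cvg (fun n => Im (f n)) M) => N; apply: le_trans (hM N).
  by apply: ler_sum => n _; exact: Im_le.
split.
  have -> : (fun N => Re (\sum_(n < N) f n)) = (fun N => \sum_(n < N) Re (f n)).
    by apply: funext => N; rewrite Re_sum.
  exact: h1.
have -> : (fun N => Im (\sum_(n < N) f n)) = (fun N => \sum_(n < N) Im (f n)).
  by apply: funext => N; rewrite Im_sum.
exact: h2.
Qed.

Lemma ccv_shift u a k : ccv u a -> ccv (fun N => u (N + k)%N) a.
Proof.
move=> [h1 h2]; split.
  by move: h1; rewrite -(cvg_shiftn k).
by move: h2; rewrite -(cvg_shiftn k).
Qed.

Lemma asum_tail (b : nat -> R[i]) k : asum b ->
  csum (fun j => b (k + j)%N) = csum b - \sum_(j < k) b j.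
Proof.
move=> hb; apply: ccv_csum.
have := ccv_add (ccv_shift k (asum_ccv hb)) (ccv_opp (ccv_cst (\sum_(j < k) b j))).
apply: ccv_ext => N /=.
rewrite addnC big_split_ord /=.
by rewrite addrAC subrr add0r.
Qed.

Lemma conv_fin (a b : nat -> R[i]) N :
  \sum_(k < N) (a k * (csum b - \sum_(j < k) b j) + b k * (csum a - \sum_(j < k.+1) a j))
  = (\sum_(k < N) a k) * csum b + (\sum_(k < N) b k) * csum a
    - (\sum_(k < N) a k) * (\sum_(k < N) b k).
Proof.
elim: N => [|N IH]; first by rewrite !big_ord0; ring.
rewrite !big_ord_recr /= IH.
ring.
Qed.

Lemma conv_mul (a b : nat -> R[i]) : asum a -> asum b ->
  ccv (fun N => \sum_(k < N) conv a b k) (csum a * csum b).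
Proof.
move=> ha hb.
have := ccv_add (ccv_add (ccv_mul (asum_ccv ha) (ccv_cst (csum b)))
                   (ccv_mul (asum_ccv hb) (ccv_cst (csum a))))
          (ccv_opp (ccv_mul (asum_ccv ha) (asum_ccv hb))).
have -> : csum a * csum b + csum b * csum a - csum a * csum b = csum a * csum b by ring.
apply: ccv_ext => N; rewrite -conv_fin.
apply: eq_bigr => k _; rewrite /conv.
by rewrite (asum_tail k hb) (asum_tail k.+1 ha).
Qed.
End S.

Section W.
Variable R : realType.
Variable w : nat -> R.
Hypothesis hw : is_weight w.
Implicit Types f : nat -> R[i].
Notation Re := (@complex.Re R).
Notation Im := (@complex.Im R).

Lemma w_gt0 n : 0 < w n. Proof. by case: hw. Qed.
Lemma w_ge1 n : 1 <= w n.
Proof.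
have h := (proj2 hw) n n; rewrite minnn in h.
have hp := w_gt0 n.
by rewrite -(ler_pM2l hp) mulr1.
Qed.

Lemma cnorm_lew (z : R[i]) n : cnorm z <= cnorm z * w n.
Proof. by rewrite -{1}(mulr1 (cnorm z)) ler_wpM2l ?cnorm_ge0 ?w_ge1. Qed.

Lemma l1_asum f : in_l1 w f -> asum f.
Proof.
move=> [M hM]; exists M => N; apply: le_trans (hM N).
by apply: ler_sum => n _; exact: cnorm_lew.
Qed.

Lemma l1_nd f : nondecreasing_seq (fun N => \sum_(n < N) cnorm (f n) * w n).
Proof.
apply/nondecreasing_seqP => n; rewrite big_ord_recr /= lerDl.
by rewrite mulr_ge0 ?cnorm_ge0 // ltW // w_gt0.
Qed.

Lemma l1_lim f : in_l1 w f ->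
  (fun N => \sum_(n < N) cnorm (f n) * w n) @ \oo --> l1norm w f.
Proof.
move=> [M hM]; apply: nondecreasing_is_cvgn; first exact: l1_nd.
by exists M => _ [n _ <-].
Qed.

Lemma l1_le f N : in_l1 w f -> \sum_(n < N) cnorm (f n) * w n <= l1norm w f.
Proof.
move=> hf; apply: nondecreasing_cvgn_le; first exact: l1_nd.
exact: (l1_lim hf).
Qed.

Lemma l1norm_ge0 f : in_l1 w f -> 0 <= l1norm w f.
Proof. by move=> hf; have := l1_le 0 hf; rewrite big_ord0. Qed.

Lemma l1_at0 f : in_l1 w f -> cnorm (f 0%N) <= l1norm w f.
Proof.
move=> hf; have := l1_le 1 hf; rewrite big_ord1 /=.
by apply: le_trans; exact: cnorm_lew.
Qed.

Lemma Re_part_le f N : `|Re (\sum_(n < N) f n)| <= \sum_(n < N) cnorm (f n) * w n.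
Proof.
rewrite Re_sum; apply: le_trans (ler_norm_sum _ _ _) _.
apply: ler_sum => n _; apply: le_trans (Re_le _) _; exact: cnorm_lew.
Qed.

Lemma Re_csum_le f : in_l1 w f -> `|Re (csum f)| <= l1norm w f.
Proof.
move=> hf; have [h1 h2] := asum_ccv (l1_asum hf).
have h3 := l1_lim hf.
have hRe : (fun N => Re (\sum_(n < N) f n)) @ \oo --> Re (csum f) by [].
rewrite ler_norml; apply/andP; split.
  rewrite lerNl; apply: (ler_cvg_to (cvgN hRe) h3); apply: nearW => N /=.
  by apply: le_trans (Re_part_le f N); rewrite -normrN ler_norm.
apply: (ler_cvg_to hRe h3); apply: nearW => N /=.
by apply: le_trans (Re_part_le f N); rewrite ler_norm.
Qed.
Lemma Im_part_le f N : `|Im (\sum_(n < N) f n)| <= \sum_(n < N) cnorm (f n) * w n.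
Proof.
rewrite Im_sum; apply: le_trans (ler_norm_sum _ _ _) _.
apply: ler_sum => n _; apply: le_trans (Im_le _) _; exact: cnorm_lew.
Qed.

Lemma Im_csum_le f : in_l1 w f -> `|Im (csum f)| <= l1norm w f.
Proof.
move=> hf; have [h1 h2] := asum_ccv (l1_asum hf).
have h3 := l1_lim hf.
have hIm : (fun N => Im (\sum_(n < N) f n)) @ \oo --> Im (csum f) by [].
rewrite ler_norml; apply/andP; split.
  rewrite lerNl; apply: (ler_cvg_to (cvgN hIm) h3); apply: nearW => N /=.
  by apply: le_trans (Im_part_le f N); rewrite -normrN ler_norm.
apply: (ler_cvg_to hIm h3); apply: nearW => N /=.
by apply: le_trans (Im_part_le f N); rewrite ler_norm.
Qed.

Lemma cnorm_csum_le f : in_l1 w f -> cnorm (csum f) <= 2 * l1norm w f.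
Proof.
move=> hf; apply: le_trans (cnorm_le _) _.
by rewrite mulr2n mulrDl mul1r lerD // ?Re_csum_le ?Im_csum_le.
Qed.

Lemma l1_zero : in_l1 w (fun _ => 0).
Proof. by exists 0 => N; rewrite big1 // => n _; rewrite cnorm0 mul0r. Qed.

Lemma l1_add f g : in_l1 w f -> in_l1 w g -> in_l1 w (fun n => f n + g n).
Proof.
move=> [M1 h1] [M2 h2]; exists (M1 + M2) => N.
apply: le_trans (lerD (h1 N) (h2 N)); rewrite -big_split /=.
apply: ler_sum => n _; rewrite -mulrDl ler_wpM2r ?cnormD //.
exact: ltW (w_gt0 n).
Qed.

Lemma l1_opp f : in_l1 w f -> in_l1 w (fun n => - f n).
Proof. by move=> [M h]; exists M => N; under eq_bigr => n _ do rewrite cnormN. Qed.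

Lemma l1_scale (l : R[i]) f : in_l1 w f -> in_l1 w (fun n => l * f n).
Proof.
move=> [M h]; exists (cnorm l * M) => N.
under eq_bigr => n _ do rewrite cnormM -mulrA.
by rewrite -mulr_sumr ler_wpM2l ?cnorm_ge0.
Qed.

Definition d0 : nat -> R[i] := fun n => if n == 0%N then 1 else 0.

Lemma l1_d0 : in_l1 w d0.
Proof.
exists (w 0%N) => N; case: N => [|N]; first by rewrite big_ord0 ltW // w_gt0.
rewrite big_ord_recl big1 ?addr0.
  by have -> : d0 ord0 = 1 by []; rewrite cnorm1 mul1r.
by move=> n _; have -> : d0 (lift ord0 n) = 0 by []; rewrite cnorm0 mul0r.
Qed.

Lemma csum_zero : csum (fun _ => 0 : R[i]) = 0.
Proof.
apply: ccv_csum; apply: ccv_ext (ccv_cst 0) => N.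
by rewrite big1.
Qed.

Lemma asum_zero : asum (fun _ => 0 : R[i]).
Proof. by exists 0 => N; rewrite big1 // => n _; rewrite cnorm0. Qed.

Lemma csum_d0 : csum d0 = 1.
Proof.
have := asum_tail 1 (l1_asum l1_d0).
have -> : (fun j => d0 (1 + j)%N) = (fun _ => 0) by [].
rewrite csum_zero big_ord1 => /eqP; rewrite eq_sym subr_eq0 => /eqP ->.
by [].
Qed.

Lemma csum_add f g : asum f -> asum g -> csum (fun n => f n + g n) = csum f + csum g.
Proof.
move=> hf hg; apply: ccv_csum.
apply: ccv_ext (ccv_add (asum_ccv hf) (asum_ccv hg)) => N.
by rewrite big_split.
Qed.

Lemma csum_sub f g : asum f -> asum g -> csum (fun n => f n + - g n) = csum f - csum g.
Proof.
move=> hf hg; apply: ccv_csum.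
apply: ccv_ext (ccv_add (asum_ccv hf) (ccv_opp (asum_ccv hg))) => N.
by rewrite big_split /= sumrN.
Qed.

Lemma csum_scale (l : R[i]) f : asum f -> csum (fun n => l * f n) = l * csum f.
Proof.
move=> hf; apply: ccv_csum.
apply: ccv_ext (ccv_mul (ccv_cst l) (asum_ccv hf)) => N.
by rewrite mulr_sumr.
Qed.

Lemma ccv_bigsum (F : nat -> nat -> R[i]) N : (forall n, asum (F n)) ->
  ccv (fun K => \sum_(k < K) \sum_(n < N) F n k) (\sum_(n < N) csum (F n)).
Proof.
move=> hF; elim: N => [|N IH].
  by rewrite big_ord0; apply: ccv_ext (ccv_cst 0) => K; rewrite big1 // => k _; rewrite big_ord0.
rewrite big_ord_recr /=.
apply: ccv_ext (ccv_add IH (asum_ccv (hF N))) => K.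
by rewrite -big_split /=; apply: eq_bigr => k _; rewrite big_ord_recr.
Qed.

Lemma csum_bigsum (F : nat -> nat -> R[i]) N : (forall n, asum (F n)) ->
  csum (fun k => \sum_(n < N) F n k) = \sum_(n < N) csum (F n).
Proof. by move=> hF; apply: ccv_csum; apply: ccv_bigsum. Qed.

Lemma lim_abs_le (u : nat -> R) (l M : R) : u @ \oo --> l ->
  (forall N, `|u N| <= M) -> `|l| <= M.
Proof.
move=> h hM; apply: (ler_cvg_to (cvg_norm h) (cvg_cst M)).
by apply: nearW => N.
Qed.

Lemma csum_bound f (M : R) : (forall N, \sum_(n < N) cnorm (f n) <= M) ->
  cnorm (csum f) <= 2 * M.
Proof.
move=> hM; have [h1 h2] := asum_ccv (ex_intro _ M hM).
have b1 : `|Re (csum f)| <= M.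
  apply: (lim_abs_le h1) => N; apply: le_trans (hM N).
  rewrite Re_sum; apply: le_trans (ler_norm_sum _ _ _) _.
  by apply: ler_sum => n _; exact: Re_le.
have b2 : `|Im (csum f)| <= M.
  apply: (lim_abs_le h2) => N; apply: le_trans (hM N).
  rewrite Im_sum; apply: le_trans (ler_norm_sum _ _ _) _.
  by apply: ler_sum => n _; exact: Im_le.
apply: le_trans (cnorm_le _) _.
by rewrite mulr2n mulrDl mul1r lerD.
Qed.


Lemma tail_bound f (M : R) k : (forall N, \sum_(n < N) cnorm (f n) <= M) ->
  forall N, \sum_(n < N) cnorm (f (k + n)%N) <= M.
Proof.
move=> hM N; apply: le_trans (hM (k + N)%N).
rewrite big_split_ord /= lerDr.
by apply: sumr_ge0 => n _; exact: cnorm_ge0.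
Qed.

Lemma l1_conv f g : in_l1 w f -> in_l1 w g -> in_l1 w (conv f g).
Proof.
move=> hf hg; have [Mf hMf] := hf; have [Mg hMg] := hg.
have [Af hAf] := l1_asum hf; have [Ag hAg] := l1_asum hg.
have Af0 : 0 <= Af by have := hAf 0%N; rewrite big_ord0.
have Ag0 : 0 <= Ag by have := hAg 0%N; rewrite big_ord0.
exists (2 * Ag * Mf + 2 * Af * Mg) => N.
have e : forall k, cnorm (conv f g k) * w k <=
   2 * Ag * (cnorm (f k) * w k) + 2 * Af * (cnorm (g k) * w k).
  move=> k; have wk := ltW (w_gt0 k).
  have t1 := @csum_bound (fun j => g (k + j)%N) _ (tail_bound k hAg).
  have t2 := @csum_bound (fun j => f (k.+1 + j)%N) _ (tail_bound k.+1 hAf).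
  rewrite /conv; apply: le_trans (ler_wpM2r wk (cnormD _ _)) _.
  rewrite !cnormM mulrDl lerD //.
    by rewrite [X in X <= _]mulrAC [X in _ <= X]mulrC ler_wpM2l ?mulr_ge0 ?cnorm_ge0.
  by rewrite [X in X <= _]mulrAC [X in _ <= X]mulrC ler_wpM2l ?mulr_ge0 ?cnorm_ge0.
apply: le_trans; first by apply: ler_sum => k _; exact: e k.
rewrite big_split /= -!mulr_sumr lerD // ler_wpM2l ?mulr_ge0 //; [exact: hMf | exact: hMg].
Qed.
End W.

Section T.
Variable R : realType.
Variable w : nat -> R.
Hypothesis hw : is_weight w.
Notation Re := (@complex.Re R).
Notation Im := (@complex.Im R).
Notation TT := (Tmat w).

Lemma memT_mul (s t : TT) : bmem s -> bmem t -> bmem (bmul s t).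
Proof.
move=> [s1 [s2 s3]] [t1 [t2 t3]]; split; [|split] => /=.
- exact: (l1_conv hw).
- by apply: (l1_add hw); apply: (l1_conv hw).
- exact: (l1_conv hw).
Qed.

Lemma memT_add (s t : TT) : bmem s -> bmem t -> bmem (badd s t).
Proof.
move=> [s1 [s2 s3]] [t1 [t2 t3]]; split; [|split] => /=; exact: (l1_add hw).
Qed.

Lemma memT_opp (s : TT) : bmem s -> bmem (bopp s).
Proof. move=> [s1 [s2 s3]]; split; [|split] => /=; exact: l1_opp. Qed.

Lemma memT_zero : bmem (bzero TT).
Proof. split; [|split] => /=; exact: l1_zero. Qed.

Lemma memT_big N (F : nat -> TT) : (forall n, bmem (F n)) ->
  bmem (\big[@badd R TT/@bzero R TT]_(n < N) F n).
Proof.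
elim: N F => [|N IH] F hF; first by rewrite big_ord0; exact: memT_zero.
rewrite big_ord_recl; apply: memT_add => //.
exact: (IH (fun n => F n.+1)).
Qed.

Lemma big11 N (F : nat -> TT) :
  (\big[@badd R TT/@bzero R TT]_(n < N) F n).1.1 = fun k => \sum_(n < N) (F n).1.1 k.
Proof.
elim: N F => [|N IH] F.
  by rewrite big_ord0; apply: funext => k; rewrite big_ord0.
rewrite big_ord_recl /= (IH (fun n => F n.+1)); apply: funext => k.
by rewrite big_ord_recl.
Qed.

Lemma bnorm_ge (t : TT) : bmem t -> l1norm w t.1.1 <= bnorm t.
Proof.
move=> [t1 [t2 t3]] /=.
by rewrite -addrA lerDl addr_ge0 // (l1norm_ge0 hw).
Qed.

Definition z0 : nat -> R[i] := fun _ => 0.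
Definition pT : TT := ((@d0 R, z0), z0).
Definition qT : TT := ((z0, z0), @d0 R).
Definition xT : TT := ((z0, @d0 R), z0).
Definition Phi (a b : TT) : R[i] := csum a.1.1 * b.1.2 0%N.

Lemma conv_z0l g : conv z0 g = z0.
Proof.
apply: funext => k; rewrite /conv /z0 /= mul0r add0r.
by rewrite csum_zero mulr0.
Qed.

Lemma conv_z0r g : conv g z0 = z0.
Proof.
apply: funext => k; rewrite /conv /z0 /= mul0r addr0.
by rewrite csum_zero mulr0.
Qed.

Lemma conv_d0d0 : conv (@d0 R) (@d0 R) = @d0 R.
Proof.
apply: funext => k; case: k => [|k]; rewrite /conv.
  have -> : (fun j => @d0 R (0 + j)%N) = @d0 R by [].
  have -> : (fun j => @d0 R (0.+1 + j)%N) = (fun _ => 0) by [].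
  by rewrite (csum_d0 hw) csum_zero (_ : @d0 R 0 = 1) // !mul1r addr0.
by rewrite (_ : @d0 R k.+1 = 0) // !mul0r addr0.
Qed.

Lemma conv_d0_at0 g : asum g -> conv g (@d0 R) 0%N = csum g.
Proof.
move=> hg; rewrite /conv.
have -> : (fun j => @d0 R (0 + j)%N) = @d0 R by [].
rewrite (csum_d0 hw) (asum_tail 1 hg) big_ord1 (_ : @d0 R 0 = 1) // !mul1r mulr1.
by rewrite addrC subrK.
Qed.

Lemma mem_d0 : bmem pT /\ bmem qT /\ bmem xT.
Proof.
have h0 := @l1_zero R w; have h1 := l1_d0 hw.
by split; [|split]; split; [|split| |split| |split].
Qed.

Lemma E_xq : bmul xT qT = xT.
Proof.
rewrite /= !conv_z0l conv_d0d0 /xT.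
by congr (_, _, _); apply: funext => n; rewrite /z0 add0r.
Qed.

Lemma E_px : bmul pT xT = xT.
Proof.
rewrite /= !conv_z0l !conv_z0r conv_d0d0 /xT.
by congr (_, _, _); apply: funext => n; rewrite /z0 addr0.
Qed.

Lemma L_left (a b : TT) : Phi (bmul xT a) b = 0.
Proof. by rewrite /Phi /= conv_z0l csum_zero mul0r. Qed.

Lemma L_right (a b : TT) : bmem a -> bmem b -> Phi a (bmul b xT) = csum (conv a.1.1 b.1.1).
Proof.
move=> [a1 _] [b1 _]; rewrite /Phi /=.
rewrite conv_d0_at0; last exact: (l1_asum hw b1).
rewrite conv_z0r /z0 addr0.
by rewrite (ccv_csum (conv_mul (l1_asum hw a1) (l1_asum hw b1))).
Qed.

Lemma bnorm_ge12 (t : TT) : bmem t -> l1norm w t.1.2 <= bnorm t.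
Proof.
move=> [t1 [t2 t3]] /=.
have := l1norm_ge0 hw t1; have := l1norm_ge0 hw t3; lra.
Qed.

Lemma Phi_bil : bdd_bilinear Phi.
Proof.
split; [|split].
- move=> a a' b [a1 [a2 a3]] [a1' [a2' a3']] _; split; rewrite /Phi /=.
    by rewrite csum_add ?mulrDl //; exact: (l1_asum hw).
  by rewrite mulrDr.
- move=> l a b [a1 _] _; split; rewrite /Phi /=.
    by rewrite csum_scale ?mulrA //; exact: (l1_asum hw).
  by rewrite mulrCA.
- exists 2 => a b ha hb; rewrite /Phi cnormM.
  apply: ler_pM; rewrite ?cnorm_ge0 //.
    apply: le_trans (cnorm_csum_le hw (proj1 ha)) _.
    by rewrite ler_pM2l // bnorm_ge.
  apply: le_trans (l1_at0 hw (proj1 (proj2 hb))) _.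
  exact: bnorm_ge12.
Qed.
End T.

Theorem mainTheorem8 (R : realType) (w : nat -> R) :
  is_weight w -> ~ approx_biprojective (Tmat w).
Proof.
move=> hw [I [le [rho [inh [refl [trans [dir [morph hconv]]]]]]]].
have [mp [mq mx]] := mem_d0 hw.
have q4 : (0:R) < 4^-1 by rewrite invr_gt0.
have [i0 Hi0] := hconv (pT w) mp _ q4.
have [c [[cmem cpi] cn]] := Hi0 i0 (refl i0).
have [rok [_ [_ [_ [rl rr]]]]] := morph i0.
have HL := rl (xT w) (qT w) mx mq; rewrite (E_xq hw) in HL.
have HR := rr (xT w) (pT w) mx mp; rewrite (E_px hw) in HR.
have Pb := Phi_bil hw.
have e1 := HL _ Pb; have e2 := HR _ Pb.
set u := rho i0 (pT w).
have [umem _] := rok _ mp.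
set h := fun n => csum (conv (u n).1.1.1 (u n).2.1.1).
have z1 : (fun n => Phi (tlmul (xT w) (rho i0 (qT w)) n).1
                     (tlmul (xT w) (rho i0 (qT w)) n).2) = (fun _ => 0).
  by apply: funext => n; exact: L_left.
have z2 : (fun n => Phi (trmul u (xT w) n).1 (trmul u (xT w) n).2) = h.
  apply: funext => n; rewrite /trmul /=.
  by apply: (L_right hw); [exact: (proj1 (umem n)) | exact: (proj2 (umem n))].
have hz : csum h = 0.
  by rewrite -z2 -e2 e1 z1 csum_zero.
have hRe : (fun N => \sum_(n < N) complex.Re (h n)) @ \oo --> complex.Re (csum c.1.1).
  apply/(@cvgrPdist_lt _ R^o _ _ _ (fun N => \sum_(n < N) complex.Re (h n))) => e e0.
  have [N0 hN0] := cpi e e0.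
  exists N0 => // N hN.
  set S := \big[@badd R (Tmat w)/@bzero R (Tmat w)]_(n < N) bmul (u n).1 (u n).2.
  have mS : bmem S.
    by apply: (memT_big hw N (F := fun n => bmul (u n).1 (u n).2)) => n; apply: (memT_mul hw); [exact: (proj1 (umem n)) | exact: (proj2 (umem n))].
  have hd : bmem (badd S (bopp c)) by apply: (memT_add hw) => //; exact: memT_opp.
  have eS : \sum_(n < N) complex.Re (h n) = complex.Re (csum S.1.1).
    rewrite /S (big11 N (fun n => bmul (u n).1 (u n).2)) (csum_bigsum (F := fun n k => conv (u n).1.1.1 (u n).2.1.1 k)).
      by rewrite (Re_sum (fun n => csum (conv (u n).1.1.1 (u n).2.1.1)) N).
    move=> n; apply: (l1_asum hw); apply: (l1_conv hw).
      exact: (proj1 (proj1 (umem n))).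
    exact: (proj1 (proj2 (umem n))).
  rewrite eS distrC -ReB -csum_sub.
  - apply: le_lt_trans (Re_csum_le hw (proj1 hd)) _.
    exact: le_lt_trans (bnorm_ge hw hd) (hN0 N hN).
  - exact: (l1_asum hw (proj1 mS)).
  - exact: (l1_asum hw (proj1 cmem)).
have hc0 : complex.Re (csum c.1.1) = 0.
  have e3 : complex.Re (csum h) = limn (fun N => \sum_(n < N) complex.Re (h n)) by [].
  rewrite -(cvg_lim _ hRe) //.
  by apply: eq_trans (esym e3) _; rewrite hz.
have hd2 : bmem (badd c (bopp (pT w))) by apply: (memT_add hw) => //; exact: memT_opp.
have := le_lt_trans (le_trans (Re_csum_le hw (proj1 hd2)) (bnorm_ge hw hd2)) cn.
rewrite (_ : (badd c (bopp (pT w))).1.1 = fun n => c.1.1 n + - @d0 R n) //.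
rewrite csum_sub; last exact: (l1_asum hw (l1_d0 hw)).
  rewrite (csum_d0 hw) ReB hc0 /= sub0r normrN normr1.
  lra.
exact: (l1_asum hw (proj1 cmem)).
Qed.
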